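(* The competitive ratio of the (offline-chosen) better algorithm between MTFO and MTFE is at least $1.75$ and at most $2$ (full cost model). That is: (i) for every list and every sequence $\sigma$, $\min\{\mathrm{MTFO}(\sigma),\mathrm{MTFE}(\sigma)\}\le 2\,\mathrm{OPT}(\sigma)$; and (ii) for every $c<1.75$ and every constant $b$ there exist a list and a sequence $\sigma$ with $\min\{\mathrm{MTFO}(\sigma),\mathrm{MTFE}(\sigma)\}>c\cdot\mathrm{OPT}(\sigma)+b$.
   Context: Static list update: a list of distinct items in some initial order; serving a request to the item at position $i$ (from the front) costs $i$ (full cost model); the accessed item may be moved closer to the front for free; two adjacent items may be swapped at cost $1$. $A(\sigma)$ is the total cost of algorithm $A$ and $\mathrm{OPT}(\sigma)$ the minimum cost of any offline algorithm from the same initial list. MTFO moves a requested item to the front on the 1st, 3rd, 5th, ... request to that item; MTFE on the 2nd, 4th, 6th, ... request; otherwise they leave it in place, and they make no paid exchanges. *)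

(* Defs.v *)
From mathcomp Require Import all_boot.
From Stdlib Require Import Reals.

Set Implicit Arguments.
Unset Strict Implicit.
Unset Printing Implicit Defensive.

(* Items are natural numbers; a list is a duplicate-free [seq nat], front = head.
   The position (1-based) of x in L is (index x L).+1. *)

(* The requested item r is moved to the front iff the number of
   earlier requests to r has parity [p] (false = even, true = odd); no paid
   exchanges. *)
Fixpoint run_parity (p : bool) (L past s : seq nat) : nat :=
  match s with
  | [::] => 0
  | r :: s' =>
      let L' := if odd (count_mem r past) == p then r :: rem r L else L in
      (index r L).+1 + run_parity p L' (rcons past r) s'
  end.

(* MTFO: move to front on the 1st, 3rd, 5th, ... request to an item
   (i.e. when an even number of earlier requests to it occurred). *)
Definition MTFO (L s : seq nat) : nat := run_parity false L [::] s.
(* MTFE: move to front on the 2nd, 4th, 6th, ... request to an item. *)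
Definition MTFE (L s : seq nat) : nat := run_parity true L [::] s.

(* Paid exchange of the adjacent items at positions i and i+1 (0-based);
   it costs 1 (an out-of-range index does nothing but is still charged). *)
Definition swap_adj (i : nat) (L : seq nat) : seq nat :=
  if i.+1 < size L
  then take i L ++ [:: nth 0 L i.+1; nth 0 L i] ++ drop i.+2 L
  else L.

(* Free exchange: move item r to the 0-based position j (j <= current position). *)
Definition move_to (j : nat) (r : nat) (L : seq nat) : seq nat :=
  let L0 := rem r L in take j L0 ++ r :: drop j L0.

(* An offline schedule gives, for each request, a sequence of paid adjacent
   exchanges performed before serving it, and a target position j for the free
   move of the requested item after serving it (clamped to the current position,
   so only moves toward the front are possible). *)
Fixpoint off_cost (L s : seq nat) (sch : seq (seq nat * nat)) : nat :=
  match s, sch with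
  | r :: s', (ps, j) :: sch' =>
      let L1 := foldl (fun L i => swap_adj i L) L ps in
      size ps + (index r L1).+1
        + off_cost (move_to (minn j (index r L1)) r L1) s' sch'
  | _, _ => 0
  end.

Definition is_OPT (L s : seq nat) (n : nat) : Prop :=
  (exists sch, size sch = size s /\ off_cost L s sch = n) /\
  (forall sch, size sch = size s -> n <= off_cost L s sch).

Definition valid_instance (L s : seq nat) : Prop :=
  uniq L /\ all (fun x => x \in L) s.

(* Main.v *)
Require Import Defs.
From mathcomp Require Import all_boot.
From Stdlib Require Import Reals.
From Stdlib Require Import Lra Classical.
From mathcomp Require Import zify.

Set Implicit Arguments.
Unset Strict Implicit.
Unset Printing Implicit Defensive.

Definition bef (K : seq nat) (x y : nat) : bool := index x K < index y K.

Lemma bef_rem r M x y : x != r -> y != r -> bef (rem r M) x y = bef M x y.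
Proof.
move=> xr yr; rewrite /bef; elim: M => [//|a M IH] /=.
case: eqP => [->|ar] /=.
  by rewrite (eq_sym r x) (negbTE xr) (eq_sym r y) (negbTE yr) ltnS.
by case: eqP => ax; case: eqP => ay //; rewrite !ltnS.
Qed.

Lemma bef_irr K x : bef K x x = false.
Proof. by rewrite /bef ltnn. Qed.

Lemma bef_asym K x y : bef K x y -> bef K y x = false.
Proof. by rewrite /bef => h; apply/negbTE; rewrite -leqNgt ltnW. Qed.

Lemma bef_neg K x y : x \in K -> y \in K -> x != y -> bef K y x = ~~ bef K x y.
Proof.
move=> xK yK xy; rewrite /bef -leqNgt ltn_neqAle.
have [h|h] := eqVneq (index y K) (index x K); last by [].
case/negP: xy; rewrite eq_sym; apply/eqP; exact: (index_inj 0 yK xK h).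
Qed.

Lemma bef_mtf_other r K x y : x != r -> y != r ->
  bef (r :: rem r K) x y = bef K x y.
Proof.
move=> xr yr; transitivity (bef (rem r K) x y); last exact: bef_rem.
by rewrite /bef /= (eq_sym r x) (negbTE xr) (eq_sym r y) (negbTE yr) ltnS.
Qed.

Lemma bef_mtf_r r K y : y != r -> bef (r :: rem r K) r y.
Proof. by move=> yr; rewrite /bef /= eqxx (eq_sym r y) (negbTE yr). Qed.

Lemma rem_cat_notin (r : nat) (A B : seq nat) : r \notin A -> rem r (A ++ B) = A ++ rem r B.
Proof.
elim: A => [//|a A IH] /=; rewrite inE negb_or => /andP [ra rA].
by rewrite eq_sym (negbTE ra) IH.
Qed.

Lemma take_index_notin (r : nat) (K : seq nat) : r \notin take (index r K) K.
Proof.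
elim: K => [//|a K IH] /=; case: eqP => [//|ar] /=.
by rewrite inE negb_or IH andbT eq_sym; apply/eqP.
Qed.

Lemma split_index (r : nat) (K : seq nat) : r \in K -> K = take (index r K) K ++ r :: drop (index r K).+1 K.
Proof.
move=> rK; rewrite -{1}(cat_take_drop (index r K) K) (drop_nth r) ?index_mem //.
by rewrite nth_index.
Qed.

Lemma move_to_rem (j r : nat) (K : seq nat) : uniq K ->
  rem r (move_to j r K) = rem r K.
Proof.
move=> uK; rewrite /move_to.
have rK0 : r \notin rem r K by rewrite mem_rem_uniqF.
rewrite rem_cat_notin; last by apply: contra rK0; apply: mem_take.
by rewrite /= eqxx cat_take_drop.
Qed.

Lemma bef_move_other (j r : nat) (K : seq nat) x y : uniq K -> x != r -> y != r ->
  bef (move_to j r K) x y = bef K x y.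
Proof.
move=> uK xr yr; rewrite -(bef_rem (move_to j r K) xr yr) move_to_rem //.
exact: bef_rem.
Qed.

Lemma bef_move_r (j r : nat) (K : seq nat) y : uniq K -> r \in K ->
  j <= index r K -> y != r -> bef K r y -> bef (move_to j r K) r y.
Proof.
move=> uK rK ji yr.
have E := split_index rK.
set T := take (index r K) K in E; set D := drop (index r K).+1 K in E.
have sT : size T = index r K by rewrite size_take index_mem rK.
have rT : r \notin T by apply: take_index_notin.
have K0 : rem r K = T ++ D by rewrite {1}E rem_cat_notin //= eqxx.
rewrite /bef => hy.
have yT : y \notin T.
  apply/negP => yT; move: hy; rewrite {2}E index_cat yT.
  by rewrite -sT ltnNge leq_eqVlt index_mem yT orbT.
have tk : take j (rem r K) = if j < size T then take j T else T.
  rewrite K0 take_cat; case: ifP => // _; have -> : j - size T = 0 by lia.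
  by rewrite take0 cats0.
have yt : y \notin take j (rem r K).
  rewrite tk; case: ifP => // _; apply: contra yT; exact: mem_take.
have rt : r \notin take j (rem r K).
  rewrite tk; case: ifP => // _; apply: contra rT; exact: mem_take.
rewrite /move_to !index_cat (negbTE yt) (negbTE rt) /= eqxx (eq_sym r y) (negbTE yr).
by rewrite addn0 addnS ltnS leq_addr.
Qed.

Lemma perm_move_to (j r : nat) (K : seq nat) : r \in K -> perm_eq (move_to j r K) K.
Proof.
move=> rK; rewrite /move_to (permPr (perm_to_rem rK)).
apply/permP => a; rewrite count_cat /= -{3}[rem r K](cat_take_drop j) count_cat; by rewrite addnCA.
Qed.

Lemma swap_split (i : nat) (K : seq nat) : i.+1 < size K ->
  let T := take i K in let D := drop i.+2 K in
  let a := nth 0 K i in let b := nth 0 K i.+1 in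
  K = T ++ a :: b :: D /\ swap_adj i K = T ++ b :: a :: D.
Proof.
move=> si T D a b; split.
  by rewrite -{1}(cat_take_drop i K) (drop_nth 0) 1?(drop_nth 0 (n:=i.+1)) //; lia.
by rewrite /swap_adj si.
Qed.

Lemma bef_swap (i : nat) (K : seq nat) x y : uniq K ->
  ~~ ((x == nth 0 K i) && (y == nth 0 K i.+1) || (x == nth 0 K i.+1) && (y == nth 0 K i)) ->
  bef (swap_adj i K) x y = bef K x y.
Proof.
move=> uK hxy.
case: (ltnP i.+1 (size K)) => si; last by rewrite /swap_adj ltnNge si.
have [E1 E2] := swap_split si.
move: E1 E2 hxy.
set T := take i K; set D := drop i.+2 K; set a := nth 0 K i; set b := nth 0 K i.+1.
move=> E1 -> hxy; rewrite E1.
rewrite E1 cat_uniq /= !negb_or in uK.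
case/and5P: uK => uT /and3P [aT bT _] /andP [ab _] _ _.
have remb : rem b (T ++ b :: a :: D) = rem b (T ++ a :: b :: D).
  by rewrite !rem_cat_notin //= !eqxx (negbTE ab).
have rema : rem a (T ++ b :: a :: D) = rem a (T ++ a :: b :: D).
  have ba : b != a by rewrite eq_sym.
  by rewrite !rem_cat_notin //= !eqxx (negbTE ba).
case: (eqVneq x y) => [->|xy]; first by rewrite !bef_irr.
have [xb|xb] := eqVneq x b; have [yb|yb] := eqVneq y b.
- by move: xy; rewrite xb yb eqxx.
- have ya : y != a by move: hxy; rewrite xb eqxx /= !negb_or negb_and => /andP [_ ->].
  have xa : x != a by rewrite xb eq_sym.
  by rewrite -(bef_rem _ xa ya) rema bef_rem.
- have xa : x != a by move: hxy; rewrite yb eqxx /= !negb_or !negb_and => /andP [/orP [] // ].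
  have ya : y != a by rewrite yb eq_sym.
  by rewrite -(bef_rem _ xa ya) rema bef_rem.
- by rewrite -(bef_rem _ xb yb) remb bef_rem.
Qed.

Lemma perm_swap (i : nat) (K : seq nat) : perm_eq (swap_adj i K) K.
Proof.
case: (ltnP i.+1 (size K)) => si; last by rewrite /swap_adj ltnNge si.
have [E1 E2] := swap_split si; move: E1 E2.
set T := take i K; set D := drop i.+2 K; set a := nth 0 K i; set b := nth 0 K i.+1.
move=> E1 ->; rewrite [X in perm_eq _ X]E1.
by apply/permP => p; rewrite !count_cat /=; lia.
Qed.

Lemma count_index_lt (K : seq nat) i : uniq K ->
  count (fun y => index y K < i) K = minn i (size K).
Proof.
elim: K i => [|a K IH] i /=; first by rewrite minn0.
case/andP => aK uK; rewrite eqxx.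
have -> : count (fun y => (if a == y then 0 else (index y K).+1) < i) K
        = count (fun y => index y K < i.-1) K.
  apply: eq_in_count => y yK /=.
  have -> : (a == y) = false by apply/negbTE; apply: contra aK => /eqP ->.
  by case: i.
rewrite IH //; case: i => [|i] /=; lia.
Qed.

Lemma sum_bool_count (L : seq nat) (a : pred nat) :
  \sum_(y <- L) (a y : nat) = count a L.
Proof.
by elim: L => [|y L IH]; rewrite ?big_nil ?big_cons //= IH.
Qed.

Lemma index_sum (L K : seq nat) r : uniq K -> perm_eq K L -> r \in K ->
  index r K = \sum_(y <- L) (bef K y r : nat).
Proof.
move=> uK pKL rK; rewrite (sum_bool_count L (fun y => bef K y r)).
rewrite -(permP pKL) /bef count_index_lt //.
by have := index_mem r K; rewrite rK => /ltnW/minn_idPl ->.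
Qed.

Definition phi_tbl : seq nat :=
  [:: 0; 3; 2; 1; 1; 2; 3; 0; 0; 3; 1; 1; 3; 3; 3; 0;
      0; 3; 3; 3; 1; 1; 3; 0; 0; 3; 1; 2; 2; 1; 3; 0].

Definition phi (px py o e q : bool) : nat :=
  nth 0 phi_tbl (16 * px + 8 * py + 4 * o + 2 * e + q).

Lemma phi_le3 px py o e q : phi px py o e q <= 3.
Proof. by case: px; case: py; case: o; case: e; case: q. Qed.

Lemma phi_init : phi false false true true true = 0.
Proof. by []. Qed.

Lemma step_x px py o e q q' : (q ==> q') ->
  nat_of_bool (~~ o) + nat_of_bool (~~ e)
  + phi (~~ px) py (if ~~ px then true else o) (if px then true else e) q'
  <= 4 * nat_of_bool (~~ q) + phi px py o e q.
Proof. by case: px; case: py; case: o; case: e; case: q; case: q'. Qed.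

Lemma step_y px py o e q q' : (q' ==> q) ->
  nat_of_bool o + nat_of_bool e
  + phi px (~~ py) (if ~~ py then false else o) (if py then false else e) q'
  <= 4 * nat_of_bool q + phi px py o e q.
Proof. by case: px; case: py; case: o; case: e; case: q; case: q'. Qed.

Definition gterm (L KO KE K past : seq nat) (x y : nat) : nat :=
  if bef L x y then
    phi (odd (count_mem x past)) (odd (count_mem y past)) (bef KO x y) (bef KE x y) (bef K x y)
  else 0.

Definition Phi (L KO KE K past : seq nat) : nat :=
  \sum_(x <- L) \sum_(y <- L) gterm L KO KE K past x y.

Lemma sum_exch (L : seq nat) (g g' : nat -> nat -> nat) (d : nat -> nat -> bool) :
  (forall x y, ~~ d x y -> g' x y = g x y) ->
  \sum_(x <- L) \sum_(y <- L) g' x y + \sum_(x <- L) \sum_(y <- L) (d x y) * g x y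
  = \sum_(x <- L) \sum_(y <- L) g x y + \sum_(x <- L) \sum_(y <- L) (d x y) * g' x y.
Proof.
move=> H; rewrite -!big_split; apply: eq_bigr => x _ /=.
rewrite -!big_split; apply: eq_bigr => y _ /=.
case: (boolP (d x y)) => h; first by rewrite !mul1n addnC.
by rewrite (H x y h) !mul0n.
Qed.

Lemma sum_pick (L : seq nat) b (c : nat -> nat) : uniq L -> b \in L ->
  \sum_(y <- L) (y == b) * c y = c b.
Proof.
move=> uL bL; rewrite (bigD1_seq b) //= eqxx mul1n big1 ?addn0 //.
by move=> y /negbTE ->.
Qed.

Lemma sum_pair1 (L : seq nat) a b c : uniq L -> a \in L -> b \in L ->
  \sum_(x <- L) \sum_(y <- L) ((x == a) && (y == b)) * c = c.
Proof.
move=> uL aL bL; rewrite (bigD1_seq a) //= [X in _ + X]big1 ?addn0.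
  rewrite (eq_bigr (fun y => (y == b) * c)); first exact: (@sum_pick L b (fun _ => c) uL bL).
  by move=> y _; rewrite eqxx.
by move=> x /negbTE xa; apply: big1 => y _; rewrite xa.
Qed.

Lemma sum_cross (L : seq nat) r (h : nat -> nat -> nat) : uniq L -> r \in L -> h r r = 0 ->
  \sum_(x <- L) \sum_(y <- L) ((x == r) || (y == r)) * h x y
  = \sum_(y <- L) (h r y + h y r).
Proof.
move=> uL rL hrr; rewrite big_split /= (bigD1_seq r) //=.
congr (_ + _).
  by apply: eq_bigr => y _; rewrite eqxx mul1n.
rewrite [RHS](bigD1_seq r) //= hrr add0n; apply: eq_bigr => x /negbTE xr.
rewrite (eq_bigr (fun y => (y == r) * h x y)); first exact: (@sum_pick L r (h x) uL rL).
by move=> y _; rewrite xr.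
Qed.

Lemma gterm_pair_le3 L KO KE K past a b :
  gterm L KO KE K past a b + gterm L KO KE K past b a <= 3.
Proof.
rewrite /gterm; case: ifP => hab.
  by rewrite (bef_asym hab) addn0 phi_le3.
by case: ifP => _; rewrite ?phi_le3.
Qed.

Lemma Phi_swap L KO KE K past i : uniq K -> perm_eq K L -> uniq L ->
  Phi L KO KE (swap_adj i K) past <= Phi L KO KE K past + 3.
Proof.
move=> uK pKL uL.
case: (ltnP i.+1 (size K)) => si; last by rewrite /swap_adj ltnNge si leq_addr.
set a := nth 0 K i; set b := nth 0 K i.+1.
have aL : a \in L by rewrite -(perm_mem pKL) mem_nth //; lia.
have bL : b \in L by rewrite -(perm_mem pKL) mem_nth.
set g := gterm L KO KE K past; set g' := gterm L KO KE (swap_adj i K) past.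
have E := @sum_exch L g g' (fun x y => (x == a) && (y == b) || (x == b) && (y == a)).
rewrite /Phi -/g -/g'.
have H : forall x y, ~~ ((x == a) && (y == b) || (x == b) && (y == a)) -> g' x y = g x y.
  by move=> x y h; rewrite /g /g' /gterm bef_swap.
have {}E := E H.
have D' : \sum_(x <- L) \sum_(y <- L) ((x == a) && (y == b) || (x == b) && (y == a)) * g' x y <= 3.
  apply: (@leq_trans (\sum_(x <- L) \sum_(y <- L)
      (((x == a) && (y == b)) * g' a b + ((x == b) && (y == a)) * g' b a))).
    apply: leq_sum => x _; apply: leq_sum => y _.
    have [/andP[/eqP-> /eqP->]|h1] := boolP ((x == a) && (y == b)).
      by rewrite /= mul1n leq_addr.
    have [/andP[/eqP-> /eqP->]|h2] := boolP ((x == b) && (y == a)).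
      by rewrite orbT mul1n leq_addl.
    by [].
  rewrite (eq_bigr (fun x => \sum_(y <- L) ((x == a) && (y == b)) * g' a b
                          + \sum_(y <- L) ((x == b) && (y == a)) * g' b a)); last first.
    by move=> x _; rewrite big_split.
  rewrite big_split /= !sum_pair1 //; exact: gterm_pair_le3.
apply: (leq_trans (leq_addr (\sum_(x <- L) \sum_(y <- L) ((x == a) && (y == b) || (x == b) && (y == a)) * g x y) _)).
by rewrite E leq_add2l.
Qed.

Lemma cnt_rcons (s : seq nat) r x : count_mem x (rcons s r) = count_mem x s + (r == x).
Proof. by rewrite -cats1 count_cat /= addn0. Qed.

Lemma bef_mtf_yr r K y : bef (r :: rem r K) y r = false.
Proof. by rewrite /bef /= eqxx ltn0. Qed.

Definition upd (p : bool) (past K : seq nat) (r : nat) :=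
  if odd (count_mem r past) == p then r :: rem r K else K.

Lemma per_y L KO KE K past r j y :
  uniq L -> perm_eq KO L -> perm_eq KE L -> perm_eq K L -> r \in L -> j <= index r K -> y \in L ->
  (bef KO y r : nat) + (bef KE y r : nat)
  + (gterm L (upd false past KO r) (upd true past KE r) (move_to j r K) (rcons past r) r y
     + gterm L (upd false past KO r) (upd true past KE r) (move_to j r K) (rcons past r) y r)
  <= 4 * (bef K y r : nat) + (gterm L KO KE K past r y + gterm L KO KE K past y r).
Proof.
move=> uL pO pE pK rL ji yL.
have uO : uniq KO by rewrite (perm_uniq pO).
have uE : uniq KE by rewrite (perm_uniq pE).
have uK : uniq K by rewrite (perm_uniq pK).
have rO : r \in KO by rewrite (perm_mem pO).
have rE : r \in KE by rewrite (perm_mem pE).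
have rK : r \in K by rewrite (perm_mem pK).
have yO : y \in KO by rewrite (perm_mem pO).
have yE : y \in KE by rewrite (perm_mem pE).
have yK : y \in K by rewrite (perm_mem pK).
case: (eqVneq y r) => [->|yr].
  by rewrite /gterm !bef_irr.
have ry : r != y by rewrite eq_sym.
have cy : count_mem y (rcons past r) = count_mem y past by rewrite cnt_rcons (negbTE ry) addn0.
have cr : odd (count_mem r (rcons past r)) = ~~ odd (count_mem r past).
  by rewrite cnt_rcons eqxx addn1 /=.
have mv : bef K r y ==> bef (move_to j r K) r y.
  by apply/implyP => h; apply: bef_move_r.
rewrite /gterm cy cr (bef_neg rL yL ry).
case: (boolP (bef L r y)) => hLry /=.
- rewrite !addn0 (bef_neg rO yO ry) (bef_neg rE yE ry) (bef_neg rK yK ry).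
  rewrite /upd; case: (odd (count_mem r past)) => /=.
  + rewrite bef_mtf_r //.
    have := step_x true (odd (count_mem y past)) (bef KO r y) (bef KE r y) mv.
    by rewrite /=.
  + rewrite bef_mtf_r //.
    have := step_x false (odd (count_mem y past)) (bef KO r y) (bef KE r y) mv.
    by rewrite /=.
- have mv' : bef (move_to j r K) y r ==> bef K y r.
    rewrite (bef_neg rK yK ry) (@bef_neg (move_to j r K) r y _ _ ry); last 2 first.
      by rewrite (perm_mem (perm_move_to j rK)).
      by rewrite (perm_mem (perm_move_to j rK)).
    by move: mv; case: (bef K r y); case: (bef (move_to j r K) r y).
  rewrite /upd; case: (odd (count_mem r past)) => /=.
  + rewrite bef_mtf_yr.
    have := step_y (odd (count_mem y past)) true (bef KO y r) (bef KE y r) mv'.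
    by rewrite /=.
  + rewrite bef_mtf_yr.
    have := step_y (odd (count_mem y past)) false (bef KO y r) (bef KE y r) mv'.
    by rewrite /=.
Qed.

Lemma Phi_step L KO KE K past r j :
  uniq L -> perm_eq KO L -> perm_eq KE L -> perm_eq K L -> r \in L -> j <= index r K ->
  index r KO + index r KE
  + Phi L (upd false past KO r) (upd true past KE r) (move_to j r K) (rcons past r)
  <= 4 * index r K + Phi L KO KE K past.
Proof.
move=> uL pO pE pK rL ji.
have uO : uniq KO by rewrite (perm_uniq pO).
have uE : uniq KE by rewrite (perm_uniq pE).
have uK : uniq K by rewrite (perm_uniq pK).
have rO : r \in KO by rewrite (perm_mem pO).
have rE : r \in KE by rewrite (perm_mem pE).
have rK : r \in K by rewrite (perm_mem pK).
set g := gterm L KO KE K past.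
set g' := gterm L (upd false past KO r) (upd true past KE r) (move_to j r K) (rcons past r).
have H : forall x y, ~~ ((x == r) || (y == r)) -> g' x y = g x y.
  move=> x y; rewrite negb_or => /andP [xr yr].
  rewrite /g /g' /gterm !cnt_rcons (eq_sym r x) (eq_sym r y) (negbTE xr) (negbTE yr) !addn0.
  rewrite bef_move_other // /upd.
  by case: (odd (count_mem r past)) => /=; rewrite ?bef_mtf_other.
have E := @sum_exch L g g' (fun x y => (x == r) || (y == r)) H.
rewrite /Phi -/g -/g'.
rewrite !sum_cross // in E; try by rewrite /g /g' /gterm bef_irr.
have S : \sum_(y <- L) ((bef KO y r : nat) + (bef KE y r : nat) + (g' r y + g' y r))
      <= \sum_(y <- L) (4 * (bef K y r : nat) + (g r y + g y r)).
  rewrite big_seq [X in _ <= X]big_seq; apply: leq_sum => y yL.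
  exact: per_y.
rewrite !big_split /= big1_eq addn0 in S. rewrite !big_split /= in E.
rewrite (index_sum uO pO rO) (index_sum uE pE rE) (index_sum uK pK rK).
lia.
Qed.

Lemma Phi_swaps L KO KE past (ps : seq nat) : uniq L -> forall K, perm_eq K L ->
  Phi L KO KE (foldl (fun L i => swap_adj i L) K ps) past <= Phi L KO KE K past + 4 * size ps
  /\ perm_eq (foldl (fun L i => swap_adj i L) K ps) L.
Proof.
move=> uL; elim: ps => [|i ps IH] K pK /=; first by rewrite addn0.
have pK' : perm_eq (swap_adj i K) L by rewrite (permPl (perm_swap i K)).
have [h1 h2] := IH _ pK'; split => //.
have := @Phi_swap L KO KE K past i; rewrite (perm_uniq pK) => /(_ uL pK uL) h3.
lia.
Qed.

Lemma main_ineq L : uniq L -> forall s KO KE K past sch,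
  perm_eq KO L -> perm_eq KE L -> perm_eq K L -> all (fun x => x \in L) s ->
  size sch = size s ->
  run_parity false KO past s + run_parity true KE past s
  <= 4 * off_cost K s sch + Phi L KO KE K past.
Proof.
move=> uL; elim=> [|r s IH] KO KE K past [|[ps j] sch] pO pE pK //= /andP [rL aL] [ssch].
set K1 := foldl (fun L i => swap_adj i L) K ps.
have [h1 pK1] := @Phi_swaps L KO KE past ps uL K pK.
have rK1 : r \in K1 by rewrite (perm_mem pK1).
have pO' : perm_eq (upd false past KO r) L.
  rewrite /upd; case: ifP => // _; rewrite -(permPr pO) perm_sym perm_to_rem //.
  by rewrite (perm_mem pO).
have pE' : perm_eq (upd true past KE r) L.
  rewrite /upd; case: ifP => // _; rewrite -(permPr pE) perm_sym perm_to_rem //.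
  by rewrite (perm_mem pE).
have pK2 : perm_eq (move_to (minn j (index r K1)) r K1) L.
  by rewrite (permPl (perm_move_to _ rK1)).
have h2 := Phi_step past uL pO pE pK1 rL (geq_minr j (index r K1)).
have h3 := IH _ _ _ (rcons past r) sch pO' pE' pK2 aL ssch.
rewrite -[X in run_parity false X _ _]/(upd false past KO r) -[X in run_parity true X _ _]/(upd true past KE r).
rewrite -/K1 in h1 h2.
lia.
Qed.

Lemma Phi_init L : Phi L L L L [::] = 0.
Proof.
rewrite /Phi big1 // => x _; rewrite big1 // => y _.
by rewrite /gterm; case: ifP => // ->.
Qed.

Lemma part1 : forall (L s : seq nat) (opt : nat),
      valid_instance L s -> is_OPT L s opt ->
      minn (MTFO L s) (MTFE L s) <= 2 * opt.
Proof.
move=> L s opt [uL aL] [[sch [ssch <-]] _].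
have := @main_ineq L uL s L L L [::] sch (perm_refl _) (perm_refl _) (perm_refl _) aL ssch.
rewrite Phi_init addn0 /MTFO /MTFE; lia.
Qed.

Fixpoint serve (K : seq nat) (s : seq (nat * bool)) : nat :=
  match s with
  | [::] => 0
  | (r, mv) :: s' => (index r K).+1 + serve (if mv then r :: rem r K else K) s'
  end.

Fixpoint servef (K : seq nat) (s : seq (nat * bool)) : seq nat :=
  match s with
  | [::] => K
  | (r, mv) :: s' => servef (if mv then r :: rem r K else K) s'
  end.

Lemma serve_cat K s1 s2 : serve K (s1 ++ s2) = serve K s1 + serve (servef K s1) s2.
Proof. by elim: s1 K => [|[r mv] s1 IH] K //=; rewrite IH addnA. Qed.

Lemma servef_cat K s1 s2 : servef K (s1 ++ s2) = servef (servef K s1) s2.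
Proof. by elim: s1 K => [|[r mv] s1 IH] K //=. Qed.

Fixpoint T (n : nat) : nat := if n is n'.+1 then T n' + n else 0.

Lemma T2 n : 2 * T n = n * n.+1.
Proof. elim: n => [|n IH] //=; rewrite mulnDr IH; lia. Qed.

Definition mk (d : bool) (B : seq nat) := [seq (b, d) | b <- B].
Definition mk2 (d1 d2 : bool) (B : seq nat) := flatten [seq [:: (b, d1); (b, d2)] | b <- B].

Lemma index_cat_notin (A B : seq nat) b : b \notin A -> index b (A ++ b :: B) = size A.
Proof. by move=> bA; rewrite index_cat (negbTE bA) /= eqxx addn0. Qed.

Lemma M1 (A B : seq nat) : uniq (A ++ B) ->
  serve (rev A ++ B) (mk true B) = size A * size B + T (size B)
  /\ servef (rev A ++ B) (mk true B) = rev B ++ rev A.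
Proof.
elim: B A => [|b B IH] A /=; first by split; rewrite ?muln0 ?cats0.
rewrite cat_uniq /= => /and3P [uA /norP [bA hAB] /andP [bB uB]].
have bA' : b \notin rev A by rewrite mem_rev.
rewrite index_cat_notin // size_rev.
have -> : rem b (rev A ++ b :: B) = rev A ++ B by rewrite rem_cat_notin //= eqxx.
have uAB : uniq (rcons A b ++ B).
  by rewrite cat_rcons cat_uniq uA /= negb_or bA hAB bB uB.
have [h1 h2] := IH (rcons A b) uAB.
rewrite rev_rcons /= in h1 h2; rewrite h1 h2 size_rcons rev_cons cat_rcons; split => //.
lia.
Qed.

Lemma M3 (A B : seq nat) : uniq (A ++ B) ->
  serve (A ++ B) (mk false B) = size A * size B + T (size B)
  /\ servef (A ++ B) (mk false B) = A ++ B.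
Proof.
elim: B A => [|b B IH] A /=; first by split; rewrite ?muln0 ?cats0.
move=> u; have bA : b \notin A.
  by move: u; rewrite cat_uniq => /and3P [_ /hasPn h _]; apply: h; rewrite inE eqxx.
rewrite index_cat_notin //.
have u' : uniq (rcons A b ++ B) by rewrite cat_rcons.
have [h1 h2] := IH (rcons A b) u'.
rewrite cat_rcons in h1 h2; rewrite h1 h2 size_rcons; split => //; lia.
Qed.

Lemma M4 (A B : seq nat) : uniq (A ++ B) ->
  serve (rev A ++ B) (mk2 true false B) = size A * size B + T (size B) + size B
  /\ servef (rev A ++ B) (mk2 true false B) = rev B ++ rev A.
Proof.
elim: B A => [|b B IH] A /=; first by split; rewrite ?muln0 ?cats0.
rewrite cat_uniq /= => /and3P [uA /norP [bA hAB] /andP [bB uB]].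
have bA' : b \notin rev A by rewrite mem_rev.
rewrite index_cat_notin // size_rev.
have -> : rem b (rev A ++ b :: B) = rev A ++ B by rewrite rem_cat_notin //= eqxx.
have uAB : uniq (rcons A b ++ B).
  by rewrite cat_rcons cat_uniq uA /= negb_or bA hAB bB uB.
have [h1 h2] := IH (rcons A b) uAB.
rewrite rev_rcons /= in h1 h2; rewrite eqxx /= h1 h2 size_rcons rev_cons cat_rcons; split => //.
lia.
Qed.

Lemma M2 (C B : seq nat) : uniq (C ++ B) ->
  serve (C ++ rev B) (mk2 false true B) = 2 * size B * (size C + size B)
  /\ servef (C ++ rev B) (mk2 false true B) = rev B ++ C.
Proof.
elim: B C => [|b B IH] C /=; first by split; rewrite ?muln0 ?cats0.
rewrite cat_uniq /= => /and3P [uC /norP [bC hCB] /andP [bB uB]].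
have bCB : b \notin C ++ rev B by rewrite mem_cat negb_or bC mem_rev.
rewrite rev_cons -cats1 catA index_cat_notin // size_cat size_rev.
have -> : rem b ((C ++ rev B) ++ [:: b]) = C ++ rev B by rewrite rem_cat_notin //= eqxx cats0.
have uCB : uniq ((b :: C) ++ B) by rewrite /= mem_cat negb_or bC bB cat_uniq uC hCB uB.
have [h1 h2] := IH (b :: C) uCB.
rewrite -cat_cons h1 h2 -catA /=; split => //; lia.
Qed.

Fixpoint annot (p : bool) (past s : seq nat) : seq (nat * bool) :=
  match s with
  | [::] => [::]
  | r :: s' => (r, odd (count_mem r past) == p) :: annot p (rcons past r) s'
  end.

Lemma run_serve p K past s : run_parity p K past s = serve K (annot p past s).
Proof. by elim: s K past => [|r s IH] K past //=; rewrite IH. Qed.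

Lemma annot_cat p past s1 s2 :
  annot p past (s1 ++ s2) = annot p past s1 ++ annot p (past ++ s1) s2.
Proof.
elim: s1 past => [|r s1 IH] past /=; first by rewrite cats0.
by rewrite IH cat_rcons.
Qed.

Definition dbl (B : seq nat) : seq nat := flatten [seq [:: b; b] | b <- B].

Lemma annot_mk p past (B : seq nat) d : uniq B ->
  (forall b, b \in B -> (odd (count_mem b past) == p) = d) -> annot p past B = mk d B.
Proof.
elim: B past => [|b B IH] past //= /andP [bB uB] H.
rewrite H ?inE ?eqxx //; congr (_ :: _); apply: IH => // x xB.
have xb : (b == x) = false by apply/negbTE; apply: contra bB => /eqP ->.
by rewrite cnt_rcons xb addn0 H // inE xB orbT.
Qed.

Lemma negb_eqb (a b : bool) : (~~ a == b) = ~~ (a == b).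
Proof. by case: a; case: b. Qed.

Lemma annot_mk2 p past (B : seq nat) d : uniq B ->
  (forall b, b \in B -> (odd (count_mem b past) == p) = d) -> annot p past (dbl B) = mk2 d (~~ d) B.
Proof.
elim: B past => [|b B IH] past //= /andP [bB uB] H.
rewrite H ?inE ?eqxx // cnt_rcons eqxx addn1 /=.
have -> : (~~ odd (count_mem b past) == p) = ~~ d.
  by rewrite -(H b) ?inE ?eqxx // negb_eqb.
congr [:: _, _ & _]; apply: IH => // x xB.
have xb : (b == x) = false by apply/negbTE; apply: contra bB => /eqP ->.
by rewrite !cnt_rcons xb !addn0 H // inE xB orbT.
Qed.

Lemma count_dbl (B : seq nat) x : count_mem x (dbl B) = 2 * count_mem x B.
Proof. elim: B => [|b B IH] //=; rewrite IH; case: (_ == _) => /=; lia. Qed.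

Definition period (u : seq nat) := u ++ dbl u ++ rev u ++ dbl (rev u).

Lemma count_period (u : seq nat) x : uniq u -> x \in u -> count_mem x (period u) = 6.
Proof.
move=> uu xu; rewrite /period !count_cat !count_dbl count_rev count_uniq_mem // xu.
by [].
Qed.

Lemma cnt_u (u : seq nat) x : uniq u -> x \in u -> count_mem x u = 1.
Proof. by move=> uu xu; rewrite count_uniq_mem // xu. Qed.

Ltac par_tac H uu :=
  let b := fresh "b" in let bu := fresh "bu" in
  move=> b bu; rewrite ?mem_rev in bu;
  rewrite ?count_cat ?count_dbl ?count_rev ?(cnt_u uu bu) ?oddD ?oddM (negbTE (H b bu)).

Lemma periodO (u : seq nat) past : uniq u -> (forall x, x \in u -> ~~ odd (count_mem x past)) ->
  serve u (annot false past (period u)) = 3 * T (size u) + 2 * size u * size u + size u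
  /\ servef u (annot false past (period u)) = u.
Proof.
move=> uu H; have ur : uniq (rev u) by rewrite rev_uniq.
rewrite /period !annot_cat.
rewrite (@annot_mk _ _ u true) //; last by par_tac H uu.
rewrite (@annot_mk2 _ _ u false) //; last by par_tac H uu.
rewrite (@annot_mk _ _ (rev u) false) //; last by par_tac H uu.
rewrite (@annot_mk2 _ _ (rev u) true) //; last by par_tac H uu.
rewrite !serve_cat !servef_cat.
have [h1 h2] := @M1 [::] u uu.
have [h3 h4] := @M2 [::] u uu.
have [h5 h6] := @M3 [::] (rev u) ur.
have [h7 h8] := @M4 [::] (rev u) ur.
rewrite /= in h1 h2 h3 h4 h5 h6 h7 h8.
rewrite h2 cats0 h4 cats0 h6 h8 revK cats0 h1 h3 h5 h7 size_rev; split => //; lia.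
Qed.

Lemma periodE (u : seq nat) past : uniq u -> (forall x, x \in u -> ~~ odd (count_mem x past)) ->
  serve u (annot true past (period u)) = 3 * T (size u) + 2 * size u * size u + size u
  /\ servef u (annot true past (period u)) = u.
Proof.
move=> uu H; have ur : uniq (rev u) by rewrite rev_uniq.
rewrite /period !annot_cat.
rewrite (@annot_mk _ _ u false) //; last by par_tac H uu.
rewrite (@annot_mk2 _ _ u true) //; last by par_tac H uu.
rewrite (@annot_mk _ _ (rev u) true) //; last by par_tac H uu.
rewrite (@annot_mk2 _ _ (rev u) false) //; last by par_tac H uu.
rewrite !serve_cat !servef_cat.
have [h1 h2] := @M3 [::] u uu.
have [h3 h4] := @M4 [::] u uu.
have [h5 h6] := @M1 [::] (rev u) ur.
have [h7 h8] := @M2 [::] (rev u) ur.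
rewrite /= in h1 h2 h3 h4 h5 h6 h7 h8.
rewrite /= h2 h4 cats0 h6 cats0 revK. rewrite revK in h7 h8. rewrite h8 cats0 h1 h3 h5 h7 size_rev; split => //; lia.
Qed.

Definition optp (u : seq nat) :=
  mk false u ++ mk2 true false u ++ mk false (rev u) ++ mk2 true false (rev u).

Lemma periodOPT (u : seq nat) : uniq u ->
  serve u (optp u) = 4 * T (size u) + 2 * size u /\ servef u (optp u) = u.
Proof.
move=> uu; have ur : uniq (rev u) by rewrite rev_uniq.
rewrite /optp !serve_cat !servef_cat.
have [h1 h2] := @M3 [::] u uu.
have [h3 h4] := @M4 [::] u uu.
have [h5 h6] := @M3 [::] (rev u) ur.
have [h7 h8] := @M4 [::] (rev u) ur.
rewrite /= in h1 h2 h3 h4 h5 h6 h7 h8.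
rewrite h2 h4 cats0 h6 h8 revK cats0 h1 h3 h5 h7 size_rev; split => //; lia.
Qed.

Lemma map_fst_mk d (B : seq nat) : map fst (mk d B) = B.
Proof. by elim: B => //= b B ->. Qed.

Lemma map_fst_mk2 d1 d2 (B : seq nat) : map fst (mk2 d1 d2 B) = dbl B.
Proof. by elim: B => //= b B ->. Qed.

Lemma map_fst_optp u : map fst (optp u) = period u.
Proof. by rewrite /optp !map_cat !map_fst_mk !map_fst_mk2. Qed.

Definition seqk (u : seq nat) k := flatten (nseq k (period u)).

Lemma par_period (u : seq nat) past : uniq u ->
  (forall x, x \in u -> ~~ odd (count_mem x past)) ->
  (forall x, x \in u -> ~~ odd (count_mem x (past ++ period u))).
Proof.
move=> uu H x xu; rewrite count_cat count_period // oddD (negbTE (H x xu)).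
by [].
Qed.

Lemma run_k p (u : seq nat) C : uniq u ->
  (forall past, (forall x, x \in u -> ~~ odd (count_mem x past)) ->
     serve u (annot p past (period u)) = C /\ servef u (annot p past (period u)) = u) ->
  forall k past, (forall x, x \in u -> ~~ odd (count_mem x past)) ->
  run_parity p u past (seqk u k) = k * C.
Proof.
move=> uu HP; elim=> [|k IH] past H; first by [].
rewrite run_serve /seqk /= annot_cat serve_cat.
have [-> ->] := HP past H.
rewrite -run_serve IH ?mulSn //; exact: par_period.
Qed.

Definition optk (u : seq nat) k := flatten (nseq k (optp u)).

Lemma opt_k (u : seq nat) k : uniq u -> serve u (optk u k) = k * (4 * T (size u) + 2 * size u).
Proof.
move=> uu; elim: k => [|k IH] //=.
rewrite /optk /= serve_cat; have [-> ->] := periodOPT uu.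
by rewrite -/(optk u k) IH mulSn.
Qed.

Lemma map_fst_optk u k : map fst (optk u k) = seqk u k.
Proof. by elim: k => [|k IH] //=; rewrite /optk /seqk /= map_cat map_fst_optp -/(optk u k) IH. Qed.

Lemma move_to_id (r : nat) (K : seq nat) : uniq K -> r \in K -> move_to (index r K) r K = K.
Proof.
move=> uK rK; have E := split_index rK.
have rT := take_index_notin r K.
have sT : size (take (index r K) K) = index r K by rewrite size_take index_mem rK.
have K0 : rem r K = take (index r K) K ++ drop (index r K).+1 K.
  by rewrite {1}E rem_cat_notin //= eqxx.
by rewrite /move_to K0 take_size_cat // drop_size_cat // -E.
Qed.

Lemma off_serve (N : nat) : forall (s : seq (nat * bool)) (K : seq nat),
  uniq K -> all (fun p => p.1 \in K) s -> size K <= N ->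
  off_cost K (map fst s) [seq ([::], if p.2 then 0 else N) | p <- s] = serve K s.
Proof.
elim=> [|[r mv] s IH] K uK //= /andP [rK aK] sK.
rewrite add0n; congr (_ + _).
have iK : index r K < size K by rewrite index_mem.
case: mv => /=.
- rewrite min0n /move_to take0 drop0 /=; apply: IH.
  + by rewrite /= mem_rem_uniqF // rem_uniq.
  + apply/allP => q qs; have := allP aK q qs.
    by rewrite -(perm_mem (perm_to_rem rK)).
  + by rewrite /= size_rem // prednK // (leq_ltn_trans (leq0n _) iK).
- have -> : minn N (index r K) = index r K by lia.
  by rewrite move_to_id // IH.
Qed.

Lemma real_bound (c b : R) : (c < 7/4)%R -> exists m k : nat, (0 < m)%nat /\
  forall opt : nat, (INR opt <= INR k * (2 * INR m * INR m + 4 * INR m))%R ->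
  (INR k * (7/2 * INR m * INR m + 5/2 * INR m) > c * INR opt + b)%R.
Proof.
move=> hc.
set c' := Rmax c 0.
have hc' : (c' < 7/4)%R by apply: Rmax_lub_lt; lra.
have c'0 : (0 <= c')%R by apply: Rmax_r.
have cc' : (c <= c')%R by apply: Rmax_l.
set d := (7/2 - 2 * c')%R.
have d0 : (0 < d)%R by rewrite /d; lra.
have [m Hm] := INR_unbounded (6 / d).
have [k Hk] := INR_unbounded b.
exists m, k.
have M1 : (1 <= INR m)%R.
  case: m Hm => [|m] Hm.
    have : (0 < 6 / d)%R by apply: Rdiv_lt_0_compat; lra.
    by rewrite /= in Hm; lra.
  by rewrite S_INR; have := pos_INR m; lra.
split.
  by case: m Hm M1 => [|m] //= _; lra.
move=> opt Hopt.
have dM : (d * INR m > 6)%R.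
  have := Rmult_lt_compat_l d _ _ d0 Hm.
  by rewrite /Rdiv (Rmult_comm 6) -Rmult_assoc Rinv_r ?Rmult_1_l; lra.
have key : (7/2 * INR m * INR m + 5/2 * INR m - c' * (2 * INR m * INR m + 4 * INR m) >= 1)%R.
  have e : (7/2 * INR m * INR m + 5/2 * INR m - c' * (2 * INR m * INR m + 4 * INR m)
            = (d * INR m) * INR m + (5/2 - 4 * c') * INR m)%R by rewrite /d; ring.
  rewrite e.
  have h1 : ((d * INR m) * INR m >= 6 * INR m)%R by nra.
  have h2 : ((5/2 - 4 * c') * INR m >= -9/2 * INR m)%R by nra.
  lra.
have ko : (0 <= INR k)%R by apply: pos_INR.
have oo : (0 <= INR opt)%R by apply: pos_INR.
have h3 : (c * INR opt <= c' * INR opt)%R by nra.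
have h4 : (c' * INR opt <= c' * (INR k * (2 * INR m * INR m + 4 * INR m)))%R by nra.
have h5 : (INR k * (7/2 * INR m * INR m + 5/2 * INR m)
          >= c' * (INR k * (2 * INR m * INR m + 4 * INR m)) + INR k)%R by nra.
lra.
Qed.

Lemma opt_exists (L s : seq nat) sch0 : size sch0 = size s ->
  exists opt, is_OPT L s opt /\ opt <= off_cost L s sch0.
Proof.
move=> hs.
pose P n := exists sch : seq (seq nat * nat), size sch = size s /\ off_cost L s sch = n.
suff H : forall n, P n -> exists m, P m /\ (forall k, P k -> m <= k) /\ m <= n.
  have [m [Pm [Hm mle]]] := H _ (ex_intro _ sch0 (conj hs erefl)).
  exists m; split => //; split => // sch hsch; apply: Hm; by exists sch.
elim/ltn_ind => n IH Pn.
case: (classic (exists k, P k /\ k < n)) => [[k [Pk kn]]|nok].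
  have [m [Pm [Hm mk]]] := IH k kn Pk.
  exists m; split => //; split => //; exact: leq_trans mk (ltnW kn).
exists n; split => //; split => // k Pk.
rewrite leqNgt; apply/negP => kn; apply: nok; by exists k.
Qed.

Lemma mem_dbl (B : seq nat) x : x \in dbl B -> x \in B.
Proof. by elim: B => [|b B IH] //=; rewrite !inE orbA orbb => /orP [->|/IH ->] //; rewrite orbT. Qed.

Lemma mem_seqk (u : seq nat) k x : x \in seqk u k -> x \in u.
Proof.
elim: k => [|k IH] //=; rewrite /seqk /= mem_cat => /orP [|/IH //].
rewrite /period !mem_cat => /or4P [//|/mem_dbl //|| /mem_dbl]; by rewrite mem_rev.
Qed.

Lemma INR_muln a b : INR (a * b) = (INR a * INR b)%R.
Proof. exact: mult_INR. Qed.

Lemma INR_addn a b : INR (a + b) = (INR a + INR b)%R.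
Proof. exact: plus_INR. Qed.

Lemma INR_T n : INR (T n) = (INR n * (INR n + 1) / 2)%R.
Proof.
have := T2 n; move/(f_equal INR); rewrite !INR_muln (S_INR n) /=.
move=> h; lra.
Qed.

Lemma part2 : forall c b : R, (c < 7 / 4)%R ->
      exists (L s : seq nat) (opt : nat),
        valid_instance L s /\ is_OPT L s opt /\
        (INR (minn (MTFO L s) (MTFE L s)) > c * INR opt + b)%R.
Proof.
move=> c b hc.
have [m [k [m0 Hb]]] := @real_bound c b hc.
set u := iota 0 m.
have uu : uniq u by apply: iota_uniq.
have su : size u = m by rewrite size_iota.
set s := seqk u k.
have ev0 : forall x, x \in u -> ~~ odd (count_mem x [::]) by [].
have hO : MTFO u s = k * (3 * T m + 2 * m * m + m).
  rewrite /MTFO /s -su; apply: (run_k uu) => // past H; exact: periodO.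
have hE : MTFE u s = k * (3 * T m + 2 * m * m + m).
  rewrite /MTFE /s -su; apply: (run_k uu) => // past H; exact: periodE.
set sch0 := [seq ([::] : seq nat, if p.2 then 0 else m) | p <- optk u k].
have aopt : all (fun p => p.1 \in u) (optk u k).
  apply/allP => p pin; apply: (@mem_seqk u k); rewrite -map_fst_optk.
  exact: map_f.
have hs : size sch0 = size s by rewrite /sch0 /s -map_fst_optk !size_map.
have hoff : off_cost u s sch0 = k * (4 * T m + 2 * m).
  rewrite /s -map_fst_optk /sch0 off_serve //; last by rewrite su.
  by rewrite opt_k // su.
have [opt [Hopt optle]] := opt_exists u hs.
exists u, s, opt; split.
  split => //; apply/allP => x; exact: mem_seqk.
split => //.
rewrite hO hE minnn.
rewrite hoff in optle.
have := Hb opt.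
rewrite !INR_muln !INR_addn !INR_muln INR_T.
have := le_INR _ _ (elimT leP optle).
move=> h1 h2.
rewrite ?INR_muln ?INR_addn ?INR_muln ?INR_T in h1.
have h3 : (INR opt <= INR k * (2 * INR m * INR m + 4 * INR m))%R.
  apply: (Rle_trans _ _ _ h1); right; rewrite /=; field.
have h4 := h2 h3.
apply: Rlt_le_trans h4 _; right; rewrite /=; field.
Qed.

Theorem theorem6 :
  (forall (L s : seq nat) (opt : nat),
      valid_instance L s -> is_OPT L s opt ->
      minn (MTFO L s) (MTFE L s) <= 2 * opt)
  /\
  (forall c b : R, (c < 7 / 4)%R ->
      exists (L s : seq nat) (opt : nat),
        valid_instance L s /\ is_OPT L s opt /\
        (INR (minn (MTFO L s) (MTFE L s)) > c * INR opt + b)%R).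
Proof.
split; [exact: part1 | exact: part2].
Qed.
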